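(* Let $H$ be a Hilbert space, let $A$ be a unitary operator on $H$ and let $B$ be a densely defined (possibly unbounded) normal operator in $H$. Then $BA$ is normal if and only if $AB$ is normal.
   Context: For (possibly unbounded) operators $S,T$, the product $ST$ has domain $D(ST)=\{x\in D(T): Tx\in D(S)\}$. A densely defined operator $T$ is normal if it is closed and $TT^*=T^*T$ (equality including domains). *)

(* Defs.v *)
From HB Require Import structures.
From mathcomp Require Import all_boot all_order all_algebra.
From mathcomp Require Import boolp classical_sets reals complex.
Set Implicit Arguments. Unset Strict Implicit. Unset Printing Implicit Defensive.
Import Order.TTheory GRing.Theory Num.Theory.
Local Open Scope ring_scope.
Local Open Scope classical_set_scope.

Section Hilbert.
Variables (R : realType) (V : lmodType R[i]) (inner : V -> V -> R[i]).

Definition nsq (x : V) : R := complex.Re (inner x x).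

Definition is_inner_product : Prop :=
  [/\ (forall a x y z, inner (a *: x + y) z = a * inner x z + inner y z),
      (forall x y, inner y x = (inner x y)^*),
      (forall x, 0 <= inner x x) &
      (forall x, inner x x = 0 -> x = 0)].

Definition converges (u : nat -> V) (x : V) : Prop :=
  forall eps : R, 0 < eps -> exists N, forall n, (N <= n)%N -> nsq (u n - x) < eps.

Definition cauchy (u : nat -> V) : Prop :=
  forall eps : R, 0 < eps -> exists N, forall n m, (N <= n)%N -> (N <= m)%N ->
    nsq (u n - u m) < eps.

Definition is_hilbert : Prop :=
  is_inner_product /\ forall u, cauchy u -> exists x, converges u x.

Record op := Op { dom : set V; app : V -> V }.

Definition op_eq (S T : op) : Prop :=
  dom S = dom T /\ forall x, dom S x -> app S x = app T x.

Definition op_comp (S T : op) : op :=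
  Op [set x | dom T x /\ dom S (app T x)] (fun x => app S (app T x)).

Definition op_id : op := Op setT id.

Definition linear_op (T : op) : Prop :=
  dom T 0 /\ forall a x y, dom T x -> dom T y ->
    dom T (a *: x + y) /\ app T (a *: x + y) = a *: app T x + app T y.

Definition dense (D : set V) : Prop :=
  forall x (eps : R), 0 < eps -> exists y, D y /\ nsq (x - y) < eps.

Definition densely_defined (T : op) : Prop := linear_op T /\ dense (dom T).

(* adjoint: D(T* ) = {y | exists z, forall x in D(T), <Tx,y> = <x,z>},
   T* y = that (unique, when D(T) is dense) z *)
Definition adj_rel (T : op) (y z : V) : Prop :=
  forall x, dom T x -> inner (app T x) y = inner x z.

Definition adjoint (T : op) : op :=
  Op [set y | exists z, adj_rel T y z] (fun y => xget 0 (adj_rel T y)).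

Definition closed_op (T : op) : Prop :=
  forall (u : nat -> V) x y, (forall n, dom T (u n)) ->
    converges u x -> converges (fun n => app T (u n)) y ->
    dom T x /\ app T x = y.

Definition normal (T : op) : Prop :=
  [/\ densely_defined T, closed_op T &
      op_eq (op_comp T (adjoint T)) (op_comp (adjoint T) T)].

Definition unitary (A : op) : Prop :=
  [/\ dom A = setT, linear_op A,
      op_eq (op_comp A (adjoint A)) op_id &
      op_eq (op_comp (adjoint A) A) op_id].

End Hilbert.

(* Main.v *)
Require Import Defs.
From mathcomp Require Import all_boot all_order all_algebra.
From mathcomp Require Import boolp classical_sets reals complex.
From mathcomp Require Import ring.
Import Order.TTheory GRing.Theory Num.Theory.
Local Open Scope ring_scope.
Local Open Scope classical_set_scope.

Lemma ip_add1 {R : realType} {V : lmodType R[i]} {inner : V -> V -> R[i]} :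
  is_inner_product inner -> forall x y z, inner (x + y) z = inner x z + inner y z.
Proof. by case=> h _ _ _ x y z; rewrite -[x in LHS]scale1r h mul1r. Qed.

Lemma ip_01 {R : realType} {V : lmodType R[i]} {inner : V -> V -> R[i]} :
  is_inner_product inner -> forall z, inner 0 z = 0.
Proof.
move=> h z; have := ip_add1 h 0 0 z; rewrite addr0.
by move/(congr1 (fun t => t - inner 0 z)); rewrite subrr addrK.
Qed.

Lemma ip_N1 {R : realType} {V : lmodType R[i]} {inner : V -> V -> R[i]} :
  is_inner_product inner -> forall x z, inner (- x) z = - inner x z.
Proof.
move=> h x z; have [hl _ _ _] := h.
by have := hl (-1) x 0 z; rewrite addr0 scaleN1r (ip_01 h) addr0 mulN1r.
Qed.

Lemma ip_add2 {R : realType} {V : lmodType R[i]} {inner : V -> V -> R[i]} :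
  is_inner_product inner -> forall x y z, inner z (x + y) = inner z x + inner z y.
Proof.
move=> h x y z; have [_ hc _ _] := h.
by rewrite [inner z x]hc [inner z y]hc [LHS]hc (ip_add1 h) rmorphD.
Qed.

Lemma ip_N2 {R : realType} {V : lmodType R[i]} {inner : V -> V -> R[i]} :
  is_inner_product inner -> forall x z, inner z (- x) = - inner z x.
Proof.
move=> h x z; have [_ hc _ _] := h.
by rewrite [inner z x]hc [LHS]hc (ip_N1 h) rmorphN.
Qed.

Lemma dense_orth {R : realType} {V : lmodType R[i]} {inner : V -> V -> R[i]}
  (D : set V) (d : V) : is_inner_product inner -> dense inner D ->
  (forall x, D x -> inner x d = 0) -> d = 0.
Proof.
move=> h hD hd; have [_ hc hp hdef] := h.
have key : forall x, D x -> nsq inner d <= nsq inner (d - x).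
  move=> x Dx; rewrite /nsq.
  have e : inner (d - x) (d - x) = inner d d + inner x x.
    rewrite (ip_add1 h) (ip_N1 h) !(ip_add2 h) !(ip_N2 h) (hd _ Dx).
    rewrite [inner d x]hc (hd _ Dx) rmorph0; ring.
  rewrite e raddfD /= lerDl.
  by have := hp x; rewrite lecE => /andP[_]; rewrite /=.
apply: hdef.
have hdd := hp d; move: hdd; rewrite lecE => /andP[/eqP hIm hRe].
case: (ltrgtP (nsq inner d) 0) => [hlt|hgt|heq].
- by move: hRe; rewrite /= -/(nsq inner d) leNgt hlt.
- have [y [Dy hy]] := hD d _ hgt.
  by move: (key y Dy); rewrite leNgt hy.
- apply/eqP; rewrite eq_complex /= -/(nsq inner d) heq eqxx /=.
  by rewrite hIm.
Qed.

Lemma lin_sub {R : realType} {V : lmodType R[i]} {f : V -> V} :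
  (forall a x y, f (a *: x + y) = a *: f x + f y) -> forall x y, f (x - y) = f x - f y.
Proof. by move=> hf x y; rewrite addrC -scaleN1r hf scaleN1r addrC. Qed.

Lemma lin_0 {R : realType} {V : lmodType R[i]} {f : V -> V} :
  (forall a x y, f (a *: x + y) = a *: f x + f y) -> f 0 = 0.
Proof. by move=> hf; have := lin_sub hf 0 0; rewrite !subrr. Qed.

Lemma nsq_iso {R : realType} {V : lmodType R[i]} {inner : V -> V -> R[i]} {f : V -> V} :
  (forall a x y, f (a *: x + y) = a *: f x + f y) ->
  (forall x y, inner (f x) (f y) = inner x y) ->
  forall x y, nsq inner (f x - f y) = nsq inner (x - y).
Proof. by move=> hf hi x y; rewrite /nsq -(lin_sub hf) hi. Qed.

Lemma adj_unique {R : realType} {V : lmodType R[i]} {inner : V -> V -> R[i]} {T : op V} {y z1 z2 : V} :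
  is_inner_product inner -> densely_defined inner T ->
  adj_rel inner T y z1 -> adj_rel inner T y z2 -> z1 = z2.
Proof.
move=> h [_ hD] h1 h2; apply/eqP; rewrite -subr_eq0; apply/eqP.
apply: (dense_orth _ _ h hD) => x Dx.
by rewrite (ip_add2 h) (ip_N2 h) -h1 // -h2 // subrr.
Qed.

Lemma adj_app {R : realType} {V : lmodType R[i]} {inner : V -> V -> R[i]} {T : op V} {y : V} :
  dom (adjoint inner T) y -> adj_rel inner T y (app (adjoint inner T) y).
Proof. by move=> hy; apply: xgetPex. Qed.

Lemma conj_normal {R : realType} {V : lmodType R[i]} {inner : V -> V -> R[i]}
  (u w : V -> V) (T : op V) :
  is_inner_product inner ->
  (forall a x y, u (a *: x + y) = a *: u x + u y) ->
  (forall a x y, w (a *: x + y) = a *: w x + w y) ->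
  (forall x, u (w x) = x) -> (forall x, w (u x) = x) ->
  (forall x y, inner (u x) (u y) = inner x y) ->
  (forall x y, inner (w x) (w y) = inner x y) ->
  normal inner T ->
  normal inner (Op [set x | dom T (w x)] (fun x => u (app T (w x)))).
Proof.
move=> h hu hw uw wu iu iw [[[T0 Tlin] Tdense] Tcl [Tdom Tapp]].
set S := Op _ _.
have Sadj : forall y z, adj_rel inner S y z <-> adj_rel inner T (w y) (w z).
  move=> y z; split => H.
    move=> v Dv; have := H (u v); rewrite /S /= wu => /(_ Dv).
    by rewrite -[in X in X -> _](uw y) -[in X in X -> _](uw z) !iu.
  move=> x /= Dx; rewrite -{1}(uw y) iu H // -iw !uw.
have Sdom : forall y, dom (adjoint inner S) y <-> dom (adjoint inner T) (w y).
  move=> y; split => [[z /Sadj Hz]|[z Hz]]; first by exists (w z).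
  by exists (u z); apply/Sadj; rewrite wu.
have Sapp : forall y, dom (adjoint inner S) y ->
    app (adjoint inner S) y = u (app (adjoint inner T) (w y)).
  move=> y hy; have h1 := adj_app hy; move/Sadj: h1 => h1.
  have h2 := adj_app (proj1 (Sdom y) hy).
  by rewrite -(adj_unique h (conj (conj T0 Tlin) Tdense) h1 h2) uw.
split.
- split.
  + split; first by rewrite /S /= (lin_0 hw).
    move=> a x y /= Dx Dy; rewrite hw; have [D1 D2] := Tlin a _ _ Dx Dy.
    by split => //; rewrite D2 hu.
  + move=> x eps he; have [y [Dy hy]] := Tdense (w x) eps he.
    exists (u y); split; first by rewrite /S /= wu.
    by rewrite -{1}(uw x) (nsq_iso hu iu).
- move=> s x y Ds cx cy.
  have := Tcl (fun n => w (s n)) (w x) (w y) Ds.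
  case.
  + by move=> eps he; have [N HN] := cx eps he; exists N => n hn; rewrite (nsq_iso hw iw) HN.
  + move=> eps he; have [N HN] := cy eps he; exists N => n hn.
    by rewrite -(wu (app T (w (s n)))) (nsq_iso hw iw) HN.
  by move=> D1 D2; split => //=; rewrite D2 uw.
have Sd : forall y, (dom (adjoint inner S) y /\ dom S (app (adjoint inner S) y)) <->
    (dom S y /\ dom (adjoint inner S) (app S y)).
  move=> y; split.
    move=> [hy hS]; have dT := proj1 (Sdom y) hy.
    move: hS; rewrite Sapp //= wu => hS.
    have : dom (op_comp T (adjoint inner T)) (w y) by [].
    rewrite Tdom => -[a b]; split => //.
    by apply/Sdom; rewrite /= wu.
  move=> [hy hS]; have dT := proj1 (Sdom _) hS; move: dT; rewrite /= wu => dT.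
  have : dom (op_comp (adjoint inner T) T) (w y) by [].
  rewrite -Tdom => -[a b]; have hy' : dom (adjoint inner S) y by apply/Sdom.
  split => //; change (dom T (w (app (adjoint inner S) y))); by rewrite Sapp // wu.
split.
- rewrite /op_comp /=; apply/funext => y /=; apply/propext.
  exact: Sd.
- move=> y hy; have [hy1 hy2] := hy; have [hz1 hz2] := proj1 (Sd y) hy.
  change (u (app T (w (app (adjoint inner S) y))) = app (adjoint inner S) (app S y)).
  rewrite Sapp // Sapp // wu; congr u.
  change (app T (app (adjoint inner T) (w y)) = app (adjoint inner T) (w (u (app T (w y))))); rewrite wu.
  have := Tapp (w y); apply.
  split; first by apply/Sdom.
  by move: hy2; change (dom T (w (app (adjoint inner S) y)) -> dom T (app (adjoint inner T) (w y))); rewrite Sapp // wu.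
Qed.

Theorem mainTheorem3 (R : realType) (V : lmodType R[i]) (inner : V -> V -> R[i])
  (hH : is_hilbert inner) (A B : op V) :
  unitary inner A -> normal inner B ->
  (normal inner (op_comp B A) <-> normal inner (op_comp A B)).
Proof.
have [h _] := hH.
move=> [hdA [A0 Alin] [hd1 ha1] [hd2 ha2]] _.
set a := app A; set a' := app (adjoint inner A).
have dA : forall x, dom A x by move=> x; rewrite hdA; exact: I.
have dA' : forall x, dom (adjoint inner A) x.
  move=> x; have : dom (op_comp A (adjoint inner A)) x by rewrite hd1; exact: I.
  by case.
have aa' : forall x, a (a' x) = x.
  move=> x; apply: (ha1 x); rewrite hd1; exact: I.
have a'a : forall x, a' (a x) = x.
  move=> x; apply: (ha2 x); rewrite hd2; exact: I.
have adj : forall x y, inner (a x) y = inner x (a' y).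
  by move=> x y; apply: (adj_app (dA' y)).
have ha : forall c x y, a (c *: x + y) = c *: a x + a y.
  by move=> c x y; exact: (Alin c x y (dA x) (dA y)).2.
have ia : forall x y, inner (a x) (a y) = inner x y.
  by move=> x y; rewrite adj a'a.
have ha' : forall c x y, a' (c *: x + y) = c *: a' x + a' y.
  by move=> c x y; rewrite -{1}(aa' x) -{1}(aa' y) -ha a'a.
have ia' : forall x y, inner (a' x) (a' y) = inner x y.
  by move=> x y; rewrite -adj aa'.
split => hN.
- have := conj_normal _ _ _ h ha ha' aa' a'a ia ia' hN.
  congr (normal inner _); rewrite /op_comp; congr Op.
  + apply/funext => x /=; apply/propext; rewrite -/a aa'.
    by split => [[_ ?]|[? _]]; split => //; exact: dA.
  + by apply/funext => x /=; rewrite -/a aa'.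
- have := conj_normal _ _ _ h ha' ha a'a aa' ia' ia hN.
  congr (normal inner _); rewrite /op_comp; congr Op.
  + apply/funext => x /=; apply/propext; rewrite -/a.
    by split => [[? _]|[_ ?]]; split => //; exact: dA.
  + by apply/funext => x /=; rewrite -/a -/a' a'a.
Qed.
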